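(* Let $A,B \in \mathcal{C}_1^{m \times n}$, $C \in \mathcal{C}_1^{n \times p}$ and $\lambda \in \mathcal{C}$ be given. Then (a) $A=B \iff \Phi_1(A) = \Phi_1(B)$. (b) $\Phi_1(A + B) = \Phi_1(A) + \Phi_1(B)$. (c) $\Phi_1(AC) = \Phi_1(A)\Phi_1(C)$, $\Phi_1(\lambda A) = \lambda \Phi_1(A)$, $\Phi_1(I_m) = I_{2m}$. (d) $\Phi_1(\overline{A}) = \begin{bmatrix} 0 & I_m \\ I_m & 0 \end{bmatrix} \Phi_1(A) \begin{bmatrix} 0 & I_n \\ I_n & 0 \end{bmatrix}$. (e) Let $A = A_0 + A_1 e$ and denote $A^{\#} = A_0^* - A_1^* e$, where $A_0^*$ and $A_1^*$ are the conjugate transposes of the complex matrices $A_0$ and $A_1$. Then $\Phi_1(A^{\#}) = \Phi_1(A)^*$, the conjugate transpose of the complex matrix $\Phi_1(A)$. (f) $A = \frac{1}{4}[(1 - ie)I_m,\ (i - e)I_m]\, \Phi_1(A)\, [(1 - ie)I_n,\ (e - i)I_n]^T$. (g) (for $m=n$) $A$ is invertible $\iff \Phi_1(A)$ is invertible, in which case $\Phi_1(A^{-1}) = \Phi_1(A)^{-1}$. (h) (for $m=n$) $p_A(A) = 0$, where $p_A(x) = \det[x I_{2m} - \Phi_1(A)]$.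
   Context: $\mathcal{C}$ denotes the complex numbers and $\mathcal{C}_1 = \mathcal{C}\{e\}$ is the complex Clifford algebra on one generator $e$ with $e^2 = -1$; every element is $a_0 + a_1 e$ with $a_0,a_1\in\mathcal{C}$, and $e$ commutes with complex scalars. $\mathcal{C}_1^{m\times n}$ denotes $m\times n$ matrices over $\mathcal{C}_1$; every $A \in \mathcal{C}_1^{m \times n}$ is written uniquely as $A = A_0 + A_1 e$ with $A_0, A_1 \in \mathcal{C}^{m \times n}$, and its conjugate is $\overline{A} = A_0 - A_1 e$. The complex matrix representation of $A$ is defined by $\Phi_1(A) = \begin{bmatrix} A_0 + A_1 i & 0 \\ 0 & A_0 - A_1 i \end{bmatrix}$, where $i$ is the complex imaginary unit. $I_m$ denotes the $m\times m$ identity matrix. These properties come from the universal factorization equality $J_{2m}\,\mathrm{diag}(A,\overline{A})\,J_{2n}^{-1} = \Phi_1(A)$ with $J_{2m} = \frac12\begin{bmatrix}(1-ie)I_m & -(i-e)I_m\\ -(i-e)I_m & (1-ie)I_m\end{bmatrix}$, $J_{2n}^{-1} = \frac12\begin{bmatrix}(1-ie)I_n & (i-e)I_n\\ (i-e)I_n & (1-ie)I_n\end{bmatrix}$. *)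

(* Defs.v *)
From HB Require Import structures.
From mathcomp Require Import all_boot all_order all_algebra.
From mathcomp Require Import complex.
From mathcomp Require Import reals.
From mathcomp Require Import ring.
Set Implicit Arguments. Unset Strict Implicit. Unset Printing Implicit Defensive.
Import Order.TTheory GRing.Theory Num.Theory.
Local Open Scope ring_scope.

(* The Clifford algebra on one generator e (e^2 = -1) over a commutative     *)
(* ring K: elements a0 + a1 e, e commuting with scalars.                     *)
Section Clifford1.
Variable K : comNzRingType.

Variant cliff1 := mkC1 of K & K.

Definition c0 (x : cliff1) := let: mkC1 a _ := x in a.
Definition c1 (x : cliff1) := let: mkC1 _ b := x in b.

Definition cliff1_to (x : cliff1) : K * K := (c0 x, c1 x).
Definition cliff1_of (p : K * K) : cliff1 := mkC1 p.1 p.2.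
Lemma cliff1_toK : cancel cliff1_to cliff1_of. Proof. by case. Qed.

HB.instance Definition _ := Equality.copy cliff1 (can_type cliff1_toK).
HB.instance Definition _ := Choice.copy cliff1 (can_type cliff1_toK).

Definition add1 (x y : cliff1) := mkC1 (c0 x + c0 y) (c1 x + c1 y).
Definition opp1 (x : cliff1) := mkC1 (- c0 x) (- c1 x).
Definition zero1 := mkC1 0 0.
Definition mul1 (x y : cliff1) :=
  mkC1 (c0 x * c0 y - c1 x * c1 y) (c0 x * c1 y + c1 x * c0 y).
Definition one1 := mkC1 1 0.

Lemma add1A : associative add1.
Proof. by case=> ? ? [? ?] [? ?]; rewrite /add1 /=; congr mkC1; ring. Qed.
Lemma add1C : commutative add1.
Proof. by case=> ? ? [? ?]; rewrite /add1 /=; congr mkC1; ring. Qed.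
Lemma add01 : left_id zero1 add1.
Proof. by case=> ? ?; rewrite /add1 /=; congr mkC1; ring. Qed.
Lemma addN1 : left_inverse zero1 opp1 add1.
Proof. by case=> ? ?; rewrite /add1 /=; congr mkC1; ring. Qed.

HB.instance Definition _ := GRing.isZmodule.Build cliff1 add1A add1C add01 addN1.

Lemma mul1A : associative mul1.
Proof. by case=> a b [c d] [f g]; rewrite /mul1 /=; congr mkC1; ring. Qed.
Lemma mul1C : commutative mul1.
Proof. by case=> a b [c d]; rewrite /mul1 /=; congr mkC1; ring. Qed.
Lemma mul11 : left_id one1 mul1.
Proof. by case=> a b; rewrite /mul1 /=; congr mkC1; ring. Qed.
Lemma mul1Dl : left_distributive mul1 add1.
Proof. by case=> a b [c d] [f g]; rewrite /mul1 /add1 /=; congr mkC1; ring. Qed.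
Lemma one1_neq0 : one1 != zero1.
Proof. by apply/eqP => -[] /eqP; rewrite oner_eq0. Qed.

HB.instance Definition _ :=
  GRing.Zmodule_isComNzRing.Build cliff1 mul1A mul1C mul11 mul1Dl one1_neq0.

End Clifford1.

Section Defs.
Variable R : realType.
Local Notation C := (R[i]).

Definition C1 := cliff1 C.

Definition inC1 (a : C) : C1 := mkC1 a 0.
Definition e1 : C1 := mkC1 0 1.
Definition i1 : C1 := inC1 'i%C.

Definition mx0 m n (A : 'M[C1]_(m, n)) : 'M[C]_(m, n) := map_mx (@c0 C) A.
Definition mx1 m n (A : 'M[C1]_(m, n)) : 'M[C]_(m, n) := map_mx (@c1 C) A.
Definition mkmx m n (X Y : 'M[C]_(m, n)) : 'M[C1]_(m, n) :=
  \matrix_(i, j) mkC1 (X i j) (Y i j).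
Definition inC1mx m n (X : 'M[C]_(m, n)) : 'M[C1]_(m, n) := map_mx inC1 X.

Definition barmx1 m n (A : 'M[C1]_(m, n)) : 'M[C1]_(m, n) :=
  mkmx (mx0 A) (- mx1 A).

Definition ctmx m n (X : 'M[C]_(m, n)) : 'M[C]_(n, m) :=
  map_mx (fun z => z^*%C) X^T.

Definition sharpmx m n (A : 'M[C1]_(m, n)) : 'M[C1]_(n, m) :=
  mkmx (ctmx (mx0 A)) (- ctmx (mx1 A)).

Definition Phi1 m n (A : 'M[C1]_(m, n)) : 'M[C]_(m + m, n + n) :=
  block_mx (mx0 A + 'i%C *: mx1 A) 0 0 (mx0 A - 'i%C *: mx1 A).

(* invertibility of a square matrix over the (non-field) ring C_1 *)
Definition invertible1 m (A : 'M[C1]_m) : Prop :=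
  exists B : 'M[C1]_m, A *m B = 1%:M /\ B *m A = 1%:M.

Definition peval1 m (p : {poly C}) (A : 'M[C1]_m) : 'M[C1]_m :=
  \sum_(k < size p) (inC1 p`_k) *: (A ^+ k).

End Defs.

(* Main.v *)
Require Import Defs.
From HB Require Import structures.
From mathcomp Require Import all_boot all_order all_algebra.
From mathcomp Require Import complex reals ring.
Import Order.TTheory GRing.Theory Num.Theory.
Local Open Scope ring_scope.

Section S.
Variable R : realType.
Local Notation C := (R[i]).
Local Notation CC := (C1 R).

Lemma c0D (x y : CC) : c0 (x + y) = c0 x + c0 y. Proof. by []. Qed.
Lemma c1D (x y : CC) : c1 (x + y) = c1 x + c1 y. Proof. by []. Qed.
Lemma c0N (x : CC) : c0 (- x) = - c0 x. Proof. by []. Qed.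
Lemma c1N (x : CC) : c1 (- x) = - c1 x. Proof. by []. Qed.
Lemma c00 : c0 (0 : CC) = 0. Proof. by []. Qed.
Lemma c10 : c1 (0 : CC) = 0. Proof. by []. Qed.
Lemma c01 : c0 (1 : CC) = 1. Proof. by []. Qed.
Lemma c11 : c1 (1 : CC) = 0. Proof. by []. Qed.
Lemma c0M (x y : CC) : c0 (x * y) = c0 x * c0 y - c1 x * c1 y. Proof. by []. Qed.
Lemma c1M (x y : CC) : c1 (x * y) = c0 x * c1 y + c1 x * c0 y. Proof. by []. Qed.
Lemma c0_sum I r (P : pred I) (F : I -> CC) :
  c0 (\sum_(i <- r | P i) F i) = \sum_(i <- r | P i) c0 (F i).
Proof. exact: (big_morph _ c0D c00). Qed.
Lemma c1_sum I r (P : pred I) (F : I -> CC) :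
  c1 (\sum_(i <- r | P i) F i) = \sum_(i <- r | P i) c1 (F i).
Proof. exact: (big_morph _ c1D c10). Qed.
Lemma cliff_ext (x y : CC) : c0 x = c0 y -> c1 x = c1 y -> x = y.
Proof. by case: x => ? ?; case: y => ? ? /= -> ->. Qed.
Lemma conj_i : ('i%C : C)^*%C = - 'i%C.
Proof. by apply/eqP; rewrite eq_complex /= oppr0 !eqxx. Qed.
Lemma cEp (x y : C) : (x + 'i%C * y)^*%C = x^*%C - 'i%C * y^*%C.
Proof.
case: x => a b; case: y => c d; apply/eqP; rewrite eq_complex /=.
by apply/andP; split; apply/eqP; ring.
Qed.
Lemma cEm (x y : C) : (x - 'i%C * y)^*%C = x^*%C + 'i%C * y^*%C.
Proof.
case: x => a b; case: y => c d; apply/eqP; rewrite eq_complex /=.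
by apply/andP; split; apply/eqP; ring.
Qed.
Lemma i_neq0 : ('i%C : C) != 0.
Proof. by rewrite eq_complex /= oner_eq0 andbF. Qed.
Lemma two_neq0 : (2%:R : C) != 0.
Proof. by rewrite pnatr_eq0. Qed.
Implicit Types (a b c : nat).

Lemma mx0E a b (A : 'M[CC]_(a,b)) i j : mx0 A i j = c0 (A i j). Proof. by rewrite mxE. Qed.
Lemma mx1E a b (A : 'M[CC]_(a,b)) i j : mx1 A i j = c1 (A i j). Proof. by rewrite mxE. Qed.
Lemma mx_ext a b (A B : 'M[CC]_(a,b)) : mx0 A = mx0 B -> mx1 A = mx1 B -> A = B.
Proof.
move=> h0 h1; apply/matrixP => i j; apply: cliff_ext.
  by move/matrixP: h0 => /(_ i j); rewrite !mxE.
by move/matrixP: h1 => /(_ i j); rewrite !mxE.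
Qed.
Lemma mx0D a b (A B : 'M[CC]_(a,b)) : mx0 (A + B) = mx0 A + mx0 B.
Proof. by apply/matrixP => i j; rewrite !mxE. Qed.
Lemma mx1D a b (A B : 'M[CC]_(a,b)) : mx1 (A + B) = mx1 A + mx1 B.
Proof. by apply/matrixP => i j; rewrite !mxE. Qed.
Lemma mx0_0 a b : mx0 (0 : 'M[CC]_(a,b)) = 0.
Proof. by apply/matrixP => i j; rewrite !mxE. Qed.
Lemma mx1_0 a b : mx1 (0 : 'M[CC]_(a,b)) = 0.
Proof. by apply/matrixP => i j; rewrite !mxE. Qed.
Lemma mx0M a b c (A : 'M[CC]_(a,b)) (B : 'M[CC]_(b,c)) :
  mx0 (A *m B) = mx0 A *m mx0 B - mx1 A *m mx1 B.
Proof.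
apply/matrixP => i j; rewrite !mxE c0_sum -sumrB; apply: eq_bigr => k _.
by rewrite !mxE.
Qed.
Lemma mx1M a b c (A : 'M[CC]_(a,b)) (B : 'M[CC]_(b,c)) :
  mx1 (A *m B) = mx0 A *m mx1 B + mx1 A *m mx0 B.
Proof.
apply/matrixP => i j; rewrite !mxE c1_sum -big_split; apply: eq_bigr => k _.
by rewrite !mxE.
Qed.
Lemma mx0Z a b (A : 'M[CC]_(a,b)) l : mx0 (inC1 l *: A) = l *: mx0 A.
Proof. by apply/matrixP => i j; rewrite !mxE c0M /= mul0r subr0. Qed.
Lemma mx1Z a b (A : 'M[CC]_(a,b)) l : mx1 (inC1 l *: A) = l *: mx1 A.
Proof. by apply/matrixP => i j; rewrite !mxE c1M /= mul0r addr0. Qed.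
Lemma mx0_1 a : mx0 (1%:M : 'M[CC]_a) = 1%:M.
Proof. by apply/matrixP => i j; rewrite !mxE; case: (i == j). Qed.
Lemma mx1_1 a : mx1 (1%:M : 'M[CC]_a) = 0.
Proof. by apply/matrixP => i j; rewrite !mxE; case: (i == j). Qed.
Lemma mx0_mk a b (X Y : 'M[C]_(a,b)) : mx0 (mkmx X Y) = X.
Proof. by apply/matrixP => i j; rewrite !mxE. Qed.
Lemma mx1_mk a b (X Y : 'M[C]_(a,b)) : mx1 (mkmx X Y) = Y.
Proof. by apply/matrixP => i j; rewrite !mxE. Qed.
Lemma zL1 (V : zmodType) (x y u v : V) : x - y + (u + v) = x + u + (v - y).
Proof. by rewrite addrACA [- y + v]addrC. Qed.
Lemma zL2 (V : zmodType) (x y u v : V) : x - y - (u + v) = x - u - (v - - y).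
Proof. by rewrite opprK !opprD addrACA [- y - v]addrC. Qed.
Lemma PhiM a b c (A : 'M[CC]_(a,b)) (B : 'M[CC]_(b,c)) :
  Phi1 (A *m B) = Phi1 A *m Phi1 B.
Proof.
rewrite /Phi1 mulmx_block !mul0mx !mulmx0 !addr0 !add0r mx0M mx1M.
congr block_mx.
  rewrite mulmxDl !mulmxDr -!scalemxAl -!scalemxAr scalerA -expr2 sqr_i scaleN1r.
  rewrite scalerDr. exact: zL1.
rewrite mulmxBl !mulmxBr -!scalemxAl -!scalemxAr scalerA -expr2 sqr_i scaleN1r.
rewrite scalerDr. exact: zL2.
Qed.
Lemma PhiD a b (A B : 'M[CC]_(a,b)) : Phi1 (A + B) = Phi1 A + Phi1 B.
Proof.
rewrite /Phi1 add_block_mx !addr0 mx0D mx1D; congr block_mx; rewrite scalerDr.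
  exact: addrACA.
by rewrite opprD addrACA.
Qed.
Lemma PhiZ a b (A : 'M[CC]_(a,b)) l : Phi1 (inC1 l *: A) = l *: Phi1 A.
Proof.
rewrite /Phi1 scale_block_mx !scaler0 mx0Z mx1Z; congr block_mx.
  by rewrite scalerDr !scalerA mulrC.
by rewrite scalerBr !scalerA mulrC.
Qed.
Lemma Phi_1 a : Phi1 (1%:M : 'M[CC]_a) = 1%:M.
Proof. by rewrite /Phi1 mx0_1 mx1_1 scaler0 addr0 subr0 -scalar_mx_block. Qed.
Lemma Phi_0 a b : Phi1 (0 : 'M[CC]_(a,b)) = 0.
Proof. by rewrite /Phi1 mx0_0 mx1_0 scaler0 addr0 subr0 block_mx0. Qed.

Lemma sep (x0 x1 y0 y1 : C) : x0 + 'i%C * x1 = y0 + 'i%C * y1 ->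
  x0 - 'i%C * x1 = y0 - 'i%C * y1 -> x0 = y0 /\ x1 = y1.
Proof.
move=> h1 h2; have n2 := two_neq0; have ni := i_neq0.
have e0 : forall z0 z1 : C, z0 = ((z0 + 'i%C * z1) + (z0 - 'i%C * z1)) / 2%:R.
  by move=> z0 z1; field.
have e1 : forall z0 z1 : C, z1 = ((z0 + 'i%C * z1) - (z0 - 'i%C * z1)) / (2%:R * 'i%C).
  by move=> z0 z1; field.
split; first by rewrite (e0 x0 x1) (e0 y0 y1) h1 h2.
by rewrite (e1 x0 x1) (e1 y0 y1) h1 h2.
Qed.

Lemma Phi_inj a b (A B : 'M[CC]_(a,b)) : Phi1 A = Phi1 B -> A = B.
Proof.
move/eq_block_mx => [h1 _ _ h2].
have H : forall i j, c0 (A i j) = c0 (B i j) /\ c1 (A i j) = c1 (B i j).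
  move=> i j; move/matrixP: h1 => /(_ i j); move/matrixP: h2 => /(_ i j).
  rewrite !mxE => e2 e1; exact: sep.
by apply/mx_ext; apply/matrixP => i j; rewrite !mxE; case: (H i j).
Qed.

Lemma Phi_bar a b (A : 'M[CC]_(a,b)) : Phi1 (barmx1 A) =
    block_mx 0 1%:M 1%:M 0 *m Phi1 A *m block_mx 0 1%:M 1%:M 0.
Proof.
rewrite /barmx1 /Phi1 mx0_mk mx1_mk !mulmx_block !mul0mx !mulmx0 !mul1mx !mulmx1 !addr0 !add0r.
by rewrite scalerN opprK.
Qed.

Lemma Phi_sharp a b (A : 'M[CC]_(a,b)) : Phi1 (sharpmx A) = ctmx (Phi1 A).
Proof.
rewrite /sharpmx /Phi1 mx0_mk mx1_mk /ctmx tr_block_mx map_block_mx !trmx0.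
congr block_mx; apply/matrixP => i j; rewrite !mxE ?conjc0 //.
  by rewrite cEp mulrN.
by rewrite cEm mulrN opprK.
Qed.
Lemma inC1mx0 a b : inC1mx (0 : 'M[C]_(a,b)) = 0.
Proof. by apply/matrixP => i j; rewrite !mxE. Qed.

Lemma keyf (x : CC) :
  (1 - i1 R * e1 R) * (1 - i1 R * e1 R) * inC1 (c0 x + 'i%C * c1 x) +
  (e1 R - i1 R) * (i1 R - e1 R) * inC1 (c0 x - 'i%C * c1 x) = inC1 4%:R * x.
Proof.
case: x => -[a b] [c d]; apply: cliff_ext; rewrite /=;
  apply/eqP; rewrite eq_complex /=; apply/andP; split; apply/eqP; ring.
Qed.
Lemma inv4 : inC1 (4%:R^-1 : C) * inC1 4%:R = 1.
Proof.
apply: cliff_ext => /=; rewrite ?mul0r ?mulr0 ?subr0 ?addr0 //.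
by rewrite mulVf // pnatr_eq0.
Qed.
Lemma part_f a b (A : 'M[CC]_(a,b)) :
  A = (inC1 (4%:R^-1) *: ((row_mx ((1 - i1 R * e1 R)%:M) ((i1 R - e1 R)%:M) : 'M[CC]_(a, a + a))
         *m inC1mx (Phi1 A)
         *m (row_mx ((1 - i1 R * e1 R)%:M) ((e1 R - i1 R)%:M) : 'M[CC]_(b, b + b))^T) : 'M[CC]_(a, b)).
Proof.
rewrite /Phi1 /inC1mx map_block_mx -!/(inC1mx _) !inC1mx0 tr_row_mx !tr_scalar_mx.
rewrite mul_row_block !mulmx0 !addr0 !add0r mul_row_col !mul_scalar_mx !mul_mx_scalar !scalerA.
apply/matrixP => i j; rewrite !mxE keyf mulrA inv4 mul1r //.
Qed.
Lemma Phi_surj a b (P Q : 'M[C]_(a,b)) : exists D, Phi1 D = block_mx P 0 0 Q.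
Proof.
exists (mkmx (2%:R^-1 *: (P + Q)) ((2%:R * 'i%C)^-1 *: (P - Q))).
rewrite /Phi1 mx0_mk mx1_mk; have n2 := two_neq0; have ni := i_neq0.
by congr block_mx; apply/matrixP => i j; rewrite !mxE; field.
Qed.

Lemma PhiX a (D : 'M[CC]_a) k : Phi1 (D ^+ k) = Phi1 D ^+ k.
Proof.
elim: k => [|k IH]; first exact: Phi_1.
by rewrite !exprS -!mulmxE PhiM IH.
Qed.

Lemma Phi_sum a b I (r : seq I) (P : pred I) (F : I -> 'M[CC]_(a,b)) :
  Phi1 (\sum_(i <- r | P i) F i) = \sum_(i <- r | P i) Phi1 (F i).
Proof. exact: (big_morph _ (@PhiD a b) (@Phi_0 a b)). Qed.

Lemma part_g a (D : 'M[CC]_a) :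
     (invertible1 D <-> Phi1 D \in unitmx) /\
     (forall D' : 'M[CC]_a, D *m D' = 1%:M /\ D' *m D = 1%:M ->
        Phi1 D' = invmx (Phi1 D)).
Proof.
split.
  split.
    move=> [D' [h _]]. have e := congr1 (@Phi1 _ _ _) h. rewrite PhiM Phi_1 in e. have [u _] := mulmx1_unit e. exact u.
  move=> hu.
  have := hu; rewrite unitmxE. rewrite /Phi1 det_ublock unitrM => /andP [uP uQ].
  rewrite -unitmxE in uP; rewrite -unitmxE in uQ.
  have [D' eD'] := @Phi_surj a a (invmx (mx0 D + 'i%C *: mx1 D)) (invmx (mx0 D - 'i%C *: mx1 D)).
  exists D'; split; apply: Phi_inj; rewrite PhiM Phi_1 eD' /Phi1 mulmx_block.
  all: rewrite ?mul0mx ?mulmx0 ?addr0 ?add0r.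
  by rewrite mulmxV // mulmxV // -scalar_mx_block.
  by rewrite mulVmx // mulVmx // -scalar_mx_block.
move=> D' [h _]; have e := congr1 (@Phi1 _ _ _) h.
rewrite PhiM Phi_1 in e.
have [u _] := mulmx1_unit e.
by rewrite -(mulKmx u (Phi1 D')) e mulmx1.
Qed.

Lemma horner_sum n (A : 'M[C]_n.+1) (p : {poly C}) :
  horner_mx A p = \sum_(k < size p) p`_k *: A ^+ k.
Proof.
rewrite -{1}(coefK p) poly_def rmorph_sum /=; apply: eq_bigr => k _.
by rewrite linearZ /= rmorphXn /= horner_mx_X.
Qed.

Lemma part_h a (D : 'M[CC]_a) : peval1 (char_poly (Phi1 D)) D = 0.
Proof.
case: a D => [|k] D; first by apply/matrixP => -[].
apply: Phi_inj; rewrite Phi_0 /peval1 Phi_sum.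
have := @Cayley_Hamilton _ (k + k.+1) (Phi1 D). rewrite (@horner_sum (k + k.+1) (Phi1 D)) => H; rewrite -[X in _ = X]H.
by apply: eq_bigr => j _; rewrite PhiZ PhiX.
Qed.
End S.

Theorem corollary7 (R : realType) (m n p : nat)
  (A B : 'M[C1 R]_(m, n)) (Cm : 'M[C1 R]_(n, p)) (lambda : R[i]) :
  (* (a) *)
  (A = B <-> Phi1 A = Phi1 B) /\
  (* (b) *)
  Phi1 (A + B) = Phi1 A + Phi1 B /\
  (* (c) *)
  (Phi1 (A *m Cm) = Phi1 A *m Phi1 Cm /\
   Phi1 (inC1 lambda *: A) = lambda *: Phi1 A /\
   Phi1 (1%:M : 'M[C1 R]_m) = 1%:M) /\
  (* (d) *)
  Phi1 (barmx1 A) =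
    block_mx 0 1%:M 1%:M 0 *m Phi1 A *m block_mx 0 1%:M 1%:M 0 /\
  (* (e) *)
  Phi1 (sharpmx A) = ctmx (Phi1 A) /\
  (* (f) *)
  A = (inC1 (4%:R^-1) *: ((row_mx ((1 - i1 R * e1 R)%:M) ((i1 R - e1 R)%:M) : 'M[C1 R]_(m, m + m))

         *m inC1mx (Phi1 A)
         *m (row_mx ((1 - i1 R * e1 R)%:M) ((e1 R - i1 R)%:M) : 'M[C1 R]_(n, n + n))^T) : 'M[C1 R]_(m, n)) /\
  (* (g), case m = n *)
  (forall D : 'M[C1 R]_m,
     (invertible1 D <-> Phi1 D \in unitmx) /\
     (forall D' : 'M[C1 R]_m, D *m D' = 1%:M /\ D' *m D = 1%:M ->
        Phi1 D' = invmx (Phi1 D))) /\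
  (* (h), case m = n *)
  (forall D : 'M[C1 R]_m, peval1 (char_poly (Phi1 D)) D = 0).
Proof.
split; first by split=> [->|]; [|exact: Phi_inj].
split; first exact: PhiD.
split; first by split; [exact: PhiM|split; [exact: PhiZ|exact: Phi_1]].
split; first exact: Phi_bar.
split; first exact: Phi_sharp.
split; first exact: part_f.
split; first exact: part_g.
exact: part_h.
Qed.
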